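(* For $n\in\mathbb{N}^\star$ and $x\ge0$ let $\phi_n(x)=\int_0^\pi e^{-2x\sin\eta}e^{2in\eta}\,\mathrm{d}\eta$. Then for every $n\ge1$ and every $x>0$ we have $\phi_n(x)>0$, and for every fixed $x>0$ the sequence $n\mapsto\phi_n(x)$ is strictly decreasing.
   Context: The function $\phi_n$ is real-valued (its imaginary part vanishes by the symmetry $\eta\mapsto\pi-\eta$). *)

(* Defs.v *)
From Stdlib Require Export Reals.
From Coquelicot Require Export Coquelicot.
Open Scope R_scope.

Definition phi_integrand (n : nat) (x : R) (eta : R) : C :=
  Cmult (RtoC (exp (- 2 * x * sin eta)))
        (cos (2 * INR n * eta), sin (2 * INR n * eta)).

Definition phi (n : nat) (x : R) : C :=
  RInt (V := C_R_CompleteNormedModule) (phi_integrand n x) 0 PI.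

(* Main.v *)
Require Import Defs.
From Stdlib Require Import Reals Lra Psatz.
From Coquelicot Require Import Coquelicot.
Open Scope R_scope.

Definition E (x t : R) := exp (- 2 * x * sin t).

Ltac cont := intros; cbv beta; apply (ex_derive_continuous (K:=R_AbsRing) (V:=R_NormedModule)); unfold E; auto_derive; auto.

Definition Ik (k : nat) (m x : R) := RInt (fun t => sin t ^ k * E x t * sin (m * t)) 0 PI.

Lemma c2_sin v k t : continuity_2d_pt (fun _ y => sin y ^ k) v t.
Proof.
  apply (continuity_1d_2d_pt_comp (fun y => sin y ^ k) (fun _ y => y)).
  - apply continuity_pt_filterlim. apply (ex_derive_continuous (K:=R_AbsRing) (V:=R_NormedModule) (fun y => sin y ^ k)). auto_derive. auto.
  - apply continuity_2d_pt_id2.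
Qed.

Lemma c2_sin1 v t : continuity_2d_pt (fun _ y => sin y) v t.
Proof. apply (continuity_2d_pt_ext (fun _ y => sin y ^ 1)). intros; simpl; ring. apply c2_sin. Qed.

Lemma c2_sinm v m t : continuity_2d_pt (fun _ y => sin (m * y)) v t.
Proof.
  apply (continuity_1d_2d_pt_comp (fun y => sin (m * y)) (fun _ y => y)).
  - apply continuity_pt_filterlim. apply (ex_derive_continuous (K:=R_AbsRing) (V:=R_NormedModule) (fun y => sin (m*y))). auto_derive. auto.
  - apply continuity_2d_pt_id2.
Qed.

Lemma c2_E v t : continuity_2d_pt (fun u y => E u y) v t.
Proof.
  unfold E.
  apply (continuity_1d_2d_pt_comp exp (fun u y => - 2 * u * sin y)).
  - apply continuity_pt_filterlim. apply (ex_derive_continuous (K:=R_AbsRing) (V:=R_NormedModule) exp). auto_derive. auto.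
  - apply continuity_2d_pt_mult.
    + apply continuity_2d_pt_mult. apply continuity_2d_pt_const. apply continuity_2d_pt_id1.
    + apply (continuity_2d_pt_ext (fun _ y => sin y ^ 1)). intros; simpl; ring. apply c2_sin.
Qed.

Lemma Ik_deriv k m x : is_derive (Ik k m) x (-2 * Ik (S k) m x).
Proof.
  unfold Ik.
  assert (HD : forall u t, Derive (fun z => sin t ^ k * E z t * sin (m * t)) u
                     = -2 * (sin t ^ (S k) * E u t * sin (m * t))).
  { intros u t. apply is_derive_unique. unfold E. auto_derive. auto. simpl. ring. }
  replace (-2 * RInt (fun t => sin t ^ S k * E x t * sin (m * t)) 0 PI)
    with (RInt (fun t => Derive (fun z => sin t ^ k * E z t * sin (m * t)) x) 0 PI).
  2:{ rewrite (RInt_ext (V:=R_CompleteNormedModule) _ (fun t => scal (-2) (sin t ^ S k * E x t * sin (m * t)))).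
      rewrite (RInt_scal (V:=R_CompleteNormedModule)). reflexivity.
      apply (ex_RInt_continuous (V:=R_CompleteNormedModule)). cont.
      intros t _. rewrite HD. reflexivity. }
  apply (is_derive_RInt_param (fun u t => sin t ^ k * E u t * sin (m * t))).
  - exists (mkposreal 1 Rlt_0_1). intros y _ t _. unfold E. auto_derive. auto.
  - intros t _.
    apply (continuity_2d_pt_ext (fun u v => (-2 * sin v ^ 1) * (sin v ^ k) * E u v * sin (m * v))).
    intros; rewrite HD; simpl; ring.
    repeat apply continuity_2d_pt_mult; try apply continuity_2d_pt_const; try apply c2_sin; try apply c2_sin1; try apply c2_E; try apply c2_sinm.
  - exists (mkposreal 1 Rlt_0_1). intros y Hy.
    apply (ex_RInt_continuous (V:=R_CompleteNormedModule)). cont.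
Qed.

Lemma phi_parts n x : phi n x =
  (RInt (fun t => E x t * cos (2 * INR n * t)) 0 PI,
   RInt (fun t => E x t * sin (2 * INR n * t)) 0 PI).
Proof.
  unfold phi. apply (is_RInt_unique (V:=C_R_CompleteNormedModule)).
  apply (is_RInt_fct_extend_pair (U:=R_NormedModule) (V:=R_NormedModule)).
  - apply (is_RInt_ext (fun t => E x t * cos (2 * INR n * t))).
    + intros t _. unfold phi_integrand, E. simpl. ring.
    + apply (RInt_correct (V:=R_CompleteNormedModule)), (ex_RInt_continuous (V:=R_CompleteNormedModule)). cont.
  - apply (is_RInt_ext (fun t => E x t * sin (2 * INR n * t))).
    + intros t _. unfold phi_integrand, E. simpl. ring.
    + apply (RInt_correct (V:=R_CompleteNormedModule)), (ex_RInt_continuous (V:=R_CompleteNormedModule)). cont.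
Qed.

Definition Qf (m x t : R) := E x t * ((2*x*sin t - 1)*cos t*sin (m*t) + m*sin t*cos (m*t)).
Definition Tf (m x t : R) := (4*x^2*sin t^3 - 6*x*sin t^2 - (4*x^2+m^2-1)*sin t + 4*x) * E x t * sin (m*t).

Lemma Qf_deriv m x t : is_derive (Qf m x) t (Tf m x t).
Proof.
  unfold Qf, Tf, E. auto_derive. auto.
  assert (Hc : cos t ^ 2 = 1 - sin t ^ 2) by (rewrite <- (sin2_cos2 t); unfold Rsqr; ring).
  ring_simplify. rewrite Hc. ring.
Qed.

Lemma exI k m x : ex_RInt (fun t => sin t ^ k * E x t * sin (m*t)) 0 PI.
Proof. apply (ex_RInt_continuous (V:=R_CompleteNormedModule)). cont. Qed.

Lemma isI k m x : is_RInt (fun t => sin t ^ k * E x t * sin (m*t)) 0 PI (Ik k m x).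
Proof. apply (RInt_correct (V:=R_CompleteNormedModule)). apply exI. Qed.

Lemma ode_id m x : sin (m * PI) = 0 ->
  4*x^2 * Ik 3 m x - 6*x * Ik 2 m x - (4*x^2+m^2-1) * Ik 1 m x + 4*x * Ik 0 m x = 0.
Proof.
  intro Hs.
  assert (H1 : is_RInt (Tf m x) 0 PI
     (plus (plus (plus (scal (4*x^2) (Ik 3 m x)) (scal (-(6*x)) (Ik 2 m x)))
        (scal (-(4*x^2+m^2-1)) (Ik 1 m x))) (scal (4*x) (Ik 0 m x)))).
  { eapply is_RInt_ext.
    2:{ apply (is_RInt_plus (V:=R_NormedModule)).
        apply (is_RInt_plus (V:=R_NormedModule)).
        apply (is_RInt_plus (V:=R_NormedModule)).
        apply (is_RInt_scal (V:=R_NormedModule)); apply (isI 3).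
        apply (is_RInt_scal (V:=R_NormedModule)); apply (isI 2).
        apply (is_RInt_scal (V:=R_NormedModule)); apply (isI 1).
        apply (is_RInt_scal (V:=R_NormedModule)); apply (isI 0). }
    intros t _. unfold Tf, plus, scal; simpl. unfold mult; simpl. ring. }
  assert (H2 : is_RInt (Tf m x) 0 PI (minus (Qf m x PI) (Qf m x 0))).
  { apply (is_RInt_derive (V:=R_CompleteNormedModule)).
    intros t _. apply Qf_deriv.
    intros t _. unfold Tf. cont. }
  assert (HQ : minus (Qf m x PI) (Qf m x 0) = 0).
  { assert (A1 : Qf m x PI = 0) by (unfold Qf; rewrite sin_PI, Hs; ring).
    assert (A2 : Qf m x 0 = 0) by (unfold Qf; rewrite Rmult_0_r, sin_0; ring).
    rewrite A1, A2. unfold minus, plus, opp; simpl; ring. }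
  pose proof (is_RInt_unique _ _ _ _ H1) as U1.
  pose proof (is_RInt_unique _ _ _ _ H2) as U2.
  rewrite U2, HQ in U1. rewrite U1. unfold plus, scal; simpl; unfold mult; simpl. ring.
Qed.

Lemma local_dec (W W1 : R -> R) (x0 l : R) :
  (forall x, derivable_pt_lim W x (W1 x)) ->
  derivable_pt_lim W1 x0 l -> W1 x0 = 0 -> l < 0 ->
  forall eps, 0 < eps -> exists z, x0 < z < x0 + eps /\ W z < W x0.
Proof.
  intros HW H1 H0 Hl eps Heps.
  destruct (H1 (- l / 2)) as [d Hd]; [lra|].
  set (h := Rmin d eps / 2).
  assert (Hdpos := cond_pos d).
  assert (Hh : 0 < h) by (unfold h; pose proof (Rmin_pos d eps Hdpos Heps); lra).
  assert (Hhd : h < d) by (unfold h; pose proof (Rmin_l d eps); lra).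
  assert (Hhe : h < eps) by (unfold h; pose proof (Rmin_r d eps); lra).
  assert (Hneg : forall c, x0 < c <= x0 + h -> W1 c < 0).
  { intros c Hc.
    assert (Hq := Hd (c - x0)).
    replace (x0 + (c - x0)) with c in Hq by ring.
    rewrite H0 in Hq.
    assert (Hcx : c - x0 <> 0) by lra.
    assert (Hab : Rabs (c - x0) < d) by (rewrite Rabs_right; lra).
    specialize (Hq Hcx Hab).
    apply Rabs_def2 in Hq. destruct Hq as [Hq1 Hq2].
    assert (HH : (W1 c - 0) / (c - x0) < 0) by lra.
    unfold Rdiv in HH. rewrite Rminus_0_r in HH.
    destruct (Rlt_le_dec (W1 c) 0) as [|Hge]; [assumption|].
    exfalso. assert (0 <= W1 c * / (c - x0)).
    { apply Rmult_le_pos; [lra|]. left; apply Rinv_0_lt_compat; lra. }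
    lra. }
  destruct (MVT_cor2 W W1 x0 (x0 + h)) as [c [Hc1 Hc2]]; [lra| intros; apply HW |].
  exists (x0 + h). split; [lra|].
  assert (W1 c < 0) by (apply Hneg; lra).
  assert (W1 c * (x0 + h - x0) < 0) by (replace (x0 + h - x0) with h by ring; nra).
  lra.
Qed.

Lemma maxp (W W1 W2 P : R -> R) (a C : R) :
  (forall x, derivable_pt_lim W x (W1 x)) ->
  (forall x, derivable_pt_lim W1 x (W2 x)) ->
  W 0 = 0 ->
  (forall x, 0 < x -> 0 < P x) ->
  0 <= a ->
  (forall x, 0 < x -> x^2 * W2 x + 3*x*W1 x - (4*x^2 + a) * W x = -4*x*P x) ->
  0 < C -> (forall x, 0 < x -> Rabs (W x) <= C / x) ->
  forall x, 0 < x -> 0 < W x.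
Proof.
  intros HW HW1 HW0 HP Ha Hode HC Hb.
  assert (Key : forall x0, 0 < x0 -> W1 x0 = 0 -> W x0 <= 0 ->
            forall eps, 0 < eps -> exists z, x0 < z < x0 + eps /\ W z < W x0).
  { intros x0 Hx0 H1 Hw eps Heps.
    apply (local_dec W W1 x0 (W2 x0) HW (HW1 x0) H1); [|exact Heps].
    specialize (Hode x0 Hx0). rewrite H1 in Hode. specialize (HP x0 Hx0).
    assert (x0 ^ 2 * W2 x0 < 0) by nra.
    assert (0 < x0 ^ 2) by nra. nra. }
  assert (Hderiv0 : forall x0 a0 b0, a0 < x0 < b0 -> (forall c, a0 < c -> c < b0 -> W x0 <= W c) -> W1 x0 = 0).
  { intros x0 a0 b0 Hab Hmin.
    set (pr := exist (fun l => derivable_pt_lim W x0 l) (W1 x0) (HW x0) : derivable_pt W x0).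
    pose proof (deriv_minimum W a0 b0 x0 pr (proj1 Hab) (proj2 Hab) Hmin) as Hd.
    exact Hd. }
  assert (StepA : forall y, 0 < y -> 0 <= W y).
  { intros y Hy. destruct (Rle_lt_dec 0 (W y)) as [|Hneg]; [assumption|exfalso].
    set (X := y + C / (- W y) + 1).
    assert (HCW : 0 < C / (- W y)) by (apply Rdiv_lt_0_compat; lra).
    assert (HX : y < X) by (unfold X; lra).
    assert (HWX : W y < W X).
    { assert (Hx := Hb X ltac:(lra)). pose proof (Rle_abs (- W X)) as Hx2; rewrite Rabs_Ropp in Hx2.
      assert (C / X < - W y).
      { apply (Rmult_lt_reg_r X); [lra|]. unfold Rdiv. rewrite Rmult_assoc, Rinv_l by lra.
        assert (C / (- W y) * (- W y) = C) by (field; lra).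
        assert (C / (- W y) < X) by (unfold X; lra).
        nra. }
      lra. }
    destruct (continuity_ab_min W 0 X) as [x0 [Hmin Hx0]]; [lra| |].
    { intros c _. apply derivable_continuous_pt. exists (W1 c). apply HW. }
    assert (Wx0 : W x0 <= W y) by (apply Hmin; lra).
    assert (Hx0pos : 0 < x0).
    { destruct (Req_dec x0 0) as [E0|]; [|lra]. rewrite E0, HW0 in Wx0. lra. }
    assert (Hx0X : x0 < X).
    { destruct (Req_dec x0 X) as [E0|]; [|lra]. rewrite E0 in Wx0. lra. }
    assert (H1 : W1 x0 = 0).
    { apply (Hderiv0 x0 0 X); [lra|]. intros c Hc1 Hc2. apply Hmin; lra. }
    destruct (Key x0 Hx0pos H1 ltac:(lra) (X - x0) ltac:(lra)) as [z [Hz Hwz]].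
    assert (W x0 <= W z) by (apply Hmin; lra). lra. }
  intros x Hx. destruct (Rle_lt_or_eq_dec 0 (W x) (StepA x Hx)) as [|Heq]; [assumption|exfalso].
  assert (H1 : W1 x = 0).
  { apply (Hderiv0 x 0 (2*x)); [lra|]. intros c Hc1 Hc2. rewrite <- Heq. apply StepA; lra. }
  destruct (Key x Hx H1 ltac:(lra) 1 ltac:(lra)) as [z [Hz Hwz]].
  assert (0 <= W z) by (apply StepA; lra). lra.
Qed.

Lemma RInt_decomp (f G h : R -> R) a b :
  (forall t, is_derive G t (f t - h t)) -> (forall t, continuous f t) -> (forall t, continuous h t) ->
  RInt f a b = G b - G a + RInt h a b.
Proof.
  intros HG Hf Hh.
  assert (Hfh : forall t, continuous (fun t => f t - h t) t).
  { intro t. apply (continuous_minus (K:=R_AbsRing) (V:=R_NormedModule)); auto. }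
  assert (E1 : is_RInt (fun t => f t - h t) a b (minus (G b) (G a))).
  { apply (is_RInt_derive (V:=R_CompleteNormedModule)); intros; auto. }
  rewrite (RInt_ext (V:=R_CompleteNormedModule) f (fun t => plus (f t - h t) (h t))).
  2:{ intros; unfold plus; simpl; ring. }
  rewrite (RInt_plus (V:=R_CompleteNormedModule)).
  - rewrite (is_RInt_unique _ _ _ _ E1). reflexivity.
  - apply (ex_RInt_continuous (V:=R_CompleteNormedModule)); intros; auto.
  - apply (ex_RInt_continuous (V:=R_CompleteNormedModule)); intros; auto.
Qed.

Lemma sin_nPI n : sin (INR n * PI) = 0.
Proof.
  induction n. simpl. rewrite Rmult_0_l; apply sin_0.
  rewrite S_INR, Rmult_plus_distr_r, Rmult_1_l, sin_plus, IHn, sin_PI. ring.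
Qed.

Lemma cos_odd_PI n : cos ((2 * INR n + 1) * PI) = -1.
Proof.
  replace ((2 * INR n + 1) * PI) with (PI + 2 * INR n * PI) by ring.
  rewrite cos_period. apply cos_PI.
Qed.

Lemma sin_odd_PI n : sin ((2 * INR n + 1) * PI) = 0.
Proof.
  replace ((2 * INR n + 1) * PI) with (PI + 2 * INR n * PI) by ring.
  rewrite sin_period. apply sin_PI.
Qed.

Lemma cos_odd_PI2 n : cos ((2 * INR n + 1) * (PI / 2)) = 0.
Proof.
  replace ((2 * INR n + 1) * (PI / 2)) with (PI / 2 + INR n * PI) by field.
  rewrite cos_plus, sin_nPI, cos_PI2. ring.
Qed.

Lemma sin_even_PI n : sin (2 * INR n * PI) = 0.
Proof. replace (2 * INR n * PI) with (0 + 2 * INR n * PI) by ring. rewrite sin_period. apply sin_0. Qed.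

Lemma cos_even_PI n : cos (2 * INR n * PI) = 1.
Proof. replace (2 * INR n * PI) with (0 + 2 * INR n * PI) by ring. rewrite cos_period. apply cos_0. Qed.

Lemma P_pos n x : 0 < x -> 0 < Ik 0 (2 * INR n + 1) x.
Proof.
  intro Hx. set (m := 2 * INR n + 1).
  assert (Hm : 0 < m) by (unfold m; pose proof (pos_INR n); lra).
  unfold Ik.
  set (f := fun t => sin t ^ 0 * E x t * sin (m * t)).
  assert (Hfc : forall t, continuous f t) by (unfold f; cont).
  rewrite <- (RInt_Chasles (V:=R_CompleteNormedModule) f 0 (PI/2) PI).
  2,3: apply (ex_RInt_continuous (V:=R_CompleteNormedModule)); intros; auto.
  set (h1 := fun t => 2 * x * cos t * E x t * (1 - cos (m * t)) / m).
  set (G1 := fun t => E x t * (1 - cos (m * t)) / m).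
  set (h2 := fun t => - (2 * x * cos t * E x t * (1 + cos (m * t)) / m)).
  set (G2 := fun t => E x t * (- (1 + cos (m * t))) / m).
  rewrite (RInt_decomp f G1 h1).
  2:{ intro t. unfold f, G1, h1, E. auto_derive. auto. field. lra. }
  2: exact Hfc.
  2:{ unfold h1. cont. }
  rewrite (RInt_decomp f G2 h2).
  2:{ intro t. unfold f, G2, h2, E. auto_derive. auto. field. lra. }
  2: exact Hfc.
  2:{ unfold h2. cont. }
  assert (I1 : 0 <= RInt h1 0 (PI/2)).
  { apply RInt_ge_0. pose proof PI_RGT_0; lra.
    apply (ex_RInt_continuous (V:=R_CompleteNormedModule)); intros; unfold h1; cont.
    intros t Ht. unfold h1. unfold Rdiv. apply Rmult_le_pos; [|left; apply Rinv_0_lt_compat; lra].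
    apply Rmult_le_pos. apply Rmult_le_pos. apply Rmult_le_pos. lra.
    apply cos_ge_0; lra. left; apply exp_pos.
    pose proof (COS_bound (m * t)); lra. }
  assert (I2 : 0 <= RInt h2 (PI/2) PI).
  { apply RInt_ge_0. pose proof PI_RGT_0; lra.
    apply (ex_RInt_continuous (V:=R_CompleteNormedModule)); intros; unfold h2; cont.
    intros t Ht. unfold h2. unfold Rdiv.
    assert (cos t <= 0) by (apply cos_le_0; lra).
    assert (0 <= E x t * (1 + cos (m * t))).
    { apply Rmult_le_pos. left; apply exp_pos. pose proof (COS_bound (m * t)); lra. }
    assert (0 < / m) by (apply Rinv_0_lt_compat; lra).
    assert (0 <= - (2 * x * cos t)) by nra.
    replace (- (2 * x * cos t * E x t * (1 + cos (m * t)) * / m))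
      with ((- (2 * x * cos t)) * (E x t * (1 + cos (m * t))) * / m) by ring.
    apply Rmult_le_pos; [|lra]. apply Rmult_le_pos; lra. }
  assert (HG : G1 (PI/2) - G1 0 + (G2 PI - G2 (PI/2)) = 2 * E x (PI/2) / m).
  { unfold G1, G2, m. rewrite cos_odd_PI2, cos_odd_PI, Rmult_0_r, cos_0.
    unfold E. rewrite sin_PI, sin_0, Rmult_0_r. field. pose proof (pos_INR n); lra. }
  assert (0 < 2 * E x (PI/2) / m).
  { unfold Rdiv. apply Rmult_lt_0_compat. apply Rmult_lt_0_compat. lra. apply exp_pos.
    apply Rinv_0_lt_compat; lra. }
  unfold plus; simpl. lra.
Qed.

Lemma cos_diff n t : cos (2 * INR n * t) - cos ((2 * INR n + 2) * t) = 2 * sin t * sin ((2 * INR n + 1) * t).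
Proof.
  replace (2 * INR n * t) with ((2 * INR n + 1) * t - t) by ring.
  replace ((2 * INR n + 2) * t) with ((2 * INR n + 1) * t + t) by ring.
  rewrite cos_minus, cos_plus. ring.
Qed.

Lemma W0 n : (1 <= n)%nat -> Ik 1 (2 * INR n + 1) 0 = 0.
Proof.
  intro Hn. assert (HnR : 1 <= INR n) by (apply (le_INR 1); exact Hn).
  unfold Ik.
  rewrite (RInt_decomp _ (fun t => (sin (2 * INR n * t) / (2 * INR n) - sin ((2 * INR n + 2) * t) / (2 * INR n + 2)) / 2) (fun _ => 0)).
  - rewrite RInt_const. rewrite !Rmult_0_r, sin_0.
    replace ((2 * INR n + 2) * PI) with (2 * INR (S n) * PI) by (rewrite S_INR; ring).
    rewrite !sin_even_PI. unfold scal; simpl; unfold mult; simpl. field. lra.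
  - intro t. auto_derive. repeat split; lra.
    unfold E. rewrite Rmult_0_r, Rmult_0_l, exp_0. replace (sin t ^ 1 * 1 * sin ((2 * INR n + 1) * t) - 0) with ((cos (2 * INR n * t) - cos ((2 * INR n + 2) * t)) / 2) by (rewrite cos_diff; field). field. lra.
  - cont.
  - intros; apply continuous_const.
Qed.

Lemma uexp u : 0 <= u -> u * exp (- u) <= 1.
Proof.
  intro Hu. pose proof (exp_ineq1_le u).
  assert (exp u * exp (- u) = 1) by (rewrite <- exp_plus; replace (u + - u) with 0 by ring; apply exp_0).
  pose proof (exp_pos (- u)). nra.
Qed.

Lemma W_bound m x : 0 < x -> Rabs (Ik 1 m x) <= (PI / 2) / x.
Proof.
  intro Hx. unfold Ik.
  replace ((PI / 2) / x) with ((PI - 0) * (/ (2 * x))) by (field; lra).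
  apply abs_RInt_le_const. pose proof PI_RGT_0; lra.
  apply (ex_RInt_continuous (V:=R_CompleteNormedModule)); cont.
  intros t Ht. assert (Hs : 0 <= sin t) by (apply sin_ge_0; lra).
  rewrite !Rabs_mult. rewrite pow_1, (Rabs_right (sin t)) by lra.
  unfold E. rewrite (Rabs_right (exp _)) by (left; apply exp_pos).
  pose proof (Rabs_le_1 := SIN_bound ((m * t))).
  assert (Habs : Rabs (sin (m * t)) <= 1) by (apply Rabs_le; lra).
  assert (H2 : sin t * exp (- 2 * x * sin t) <= / (2 * x)).
  { pose proof (uexp (2 * x * sin t) ltac:(nra)) as U.
    replace (- (2 * x * sin t)) with (- 2 * x * sin t) in U by ring.
    apply (Rmult_le_reg_l (2 * x)); [lra|]. rewrite Rinv_r by lra. nra. }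
  assert (0 <= sin t * exp (- 2 * x * sin t)) by (apply Rmult_le_pos; [lra|left; apply exp_pos]).
  assert (0 <= Rabs (sin (m * t))) by apply Rabs_pos.
  nra.
Qed.

Lemma Re_pos n x : (1 <= n)%nat -> 0 < x -> 0 < RInt (fun t => E x t * cos (2 * INR n * t)) 0 PI.
Proof.
  intros Hn Hx. assert (HnR : 1 <= INR n) by (apply (le_INR 1); exact Hn).
  set (h := fun t => (2 * x * sin t + 4 * x^2 * cos t ^ 2) * E x t * (1 - cos (2 * INR n * t)) / (4 * INR n ^ 2)).
  rewrite (RInt_decomp _ (fun t => E x t * (sin (2 * INR n * t) / (2 * INR n) + 2 * x * cos t * (1 - cos (2 * INR n * t)) / (4 * INR n ^ 2))) h).
  - rewrite sin_even_PI, cos_even_PI, Rmult_0_r, sin_0, cos_0.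
    assert (Hh : forall t, 0 < t < PI -> 0 <= h t).
    { intros t Ht. unfold h. assert (0 <= sin t) by (apply sin_ge_0; lra).
      pose proof (COS_bound (2 * INR n * t)). pose proof (exp_pos (-2 * x * sin t)). unfold E.
      apply Rmult_le_pos. 2:{ left; apply Rinv_0_lt_compat; nra. }
      apply Rmult_le_pos; [|lra]. apply Rmult_le_pos; [|lra]. nra. }
    set (c := PI / (2 * INR n)).
    assert (Hc0 : 0 < c) by (unfold c; apply Rdiv_lt_0_compat; [apply PI_RGT_0|lra]).
    assert (HcP : c <= PI / 2).
    { unfold c. apply Rmult_le_compat_l; [pose proof PI_RGT_0; lra|].
      apply Rinv_le_contravar; lra. }
    assert (hc : forall t, continuous h t) by (unfold h; cont).
    rewrite <- (RInt_Chasles (V:=R_CompleteNormedModule) h 0 c PI).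
    2,3: apply (ex_RInt_continuous (V:=R_CompleteNormedModule)); intros; auto.
    assert (A1 : 0 < RInt h 0 c).
    { apply RInt_gt_0; [lra| |intros; auto].
      intros t Ht. unfold h.
      assert (0 < sin t) by (apply sin_gt_0; pose proof PI_RGT_0; lra).
      assert (Hs : 0 < sin (INR n * t)).
      { apply sin_gt_0. nra.
        assert (INR n * t < INR n * c) by (apply Rmult_lt_compat_l; lra).
        assert (INR n * c = PI / 2) by (unfold c; field; lra). pose proof PI_RGT_0. lra. }
      replace (2 * INR n * t) with (2 * (INR n * t)) by ring. rewrite cos_2a_sin.
      pose proof (exp_pos (-2 * x * sin t)). unfold E.
      apply Rdiv_lt_0_compat; [|nra].
      apply Rmult_lt_0_compat; [|nra]. apply Rmult_lt_0_compat; [|lra]. nra. }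
    assert (A2 : 0 <= RInt h c PI).
    { apply RInt_ge_0. lra. apply (ex_RInt_continuous (V:=R_CompleteNormedModule)); intros; auto.
      intros t Ht. apply Hh. lra. }
    unfold E. rewrite sin_PI, sin_0, Rmult_0_r. unfold plus; simpl. 
    replace (1 - 1) with 0 by ring. unfold Rdiv.
    repeat (rewrite Rmult_0_l || rewrite Rmult_0_r || rewrite Rplus_0_l). lra.
  - intro t. unfold h, E. auto_derive. repeat split; nra. field. lra.
  - cont.
  - unfold h; cont.
Qed.

Lemma Im_zero n x : RInt (fun t => E x t * sin (2 * INR n * t)) 0 PI = 0.
Proof.
  set (f := fun t => E x t * sin (2 * INR n * t)).
  assert (Hex : ex_RInt f PI 0) by (apply (ex_RInt_continuous (V:=R_CompleteNormedModule)); unfold f; cont).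
  pose proof (RInt_comp_lin (V:=R_CompleteNormedModule) f (-1) PI 0 PI) as H.
  replace (-1 * 0 + PI) with PI in H by ring. replace (-1 * PI + PI) with 0 in H by ring.
  specialize (H Hex).
  rewrite (RInt_ext (V:=R_CompleteNormedModule) _ f) in H.
  2:{ intros t _. unfold f, E, scal; simpl; unfold mult; simpl.
      replace (-1 * t + PI) with (PI - t) by ring. rewrite sin_PI_x.
      replace (2 * INR n * (PI - t)) with (2 * INR n * PI - 2 * INR n * t) by ring.
      rewrite sin_minus, sin_even_PI, cos_even_PI. ring. }
  rewrite <- (opp_RInt_swap (V:=R_CompleteNormedModule)) in H.
  2:{ apply (ex_RInt_continuous (V:=R_CompleteNormedModule)); unfold f; cont. }
  unfold opp in H; simpl in H. rewrite <- (opp_RInt_swap (V:=R_CompleteNormedModule) f PI 0 Hex). unfold opp; simpl. lra.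
Qed.

Lemma link n x : RInt (fun t => E x t * cos (2 * INR n * t)) 0 PI - RInt (fun t => E x t * cos (2 * INR (S n) * t)) 0 PI
   = 2 * Ik 1 (2 * INR n + 1) x.
Proof.
  rewrite <- (RInt_minus (V:=R_CompleteNormedModule)).
  2,3: apply (ex_RInt_continuous (V:=R_CompleteNormedModule)); cont.
  unfold Ik. rewrite <- (RInt_scal (V:=R_CompleteNormedModule)).
  2: apply (ex_RInt_continuous (V:=R_CompleteNormedModule)); cont.
  apply (RInt_ext (V:=R_CompleteNormedModule)). intros t _.
  rewrite S_INR. unfold minus, plus, opp, scal; simpl; unfold mult; simpl.
  replace (2 * (INR n + 1) * t) with ((2 * INR n + 2) * t) by ring.
  pose proof (cos_diff n t). 
  transitivity (E x t * (cos (2 * INR n * t) - cos ((2 * INR n + 2) * t))). ring.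
  rewrite H. ring.
Qed.

Theorem proposition3p2 :
  (forall (n : nat) (x : R), (1 <= n)%nat -> 0 < x ->
     Im (phi n x) = 0 /\ 0 < Re (phi n x)) /\
  (forall (x : R), 0 < x ->
     forall (n : nat), (1 <= n)%nat -> Re (phi (S n) x) < Re (phi n x)).
Proof.
  split.
  - intros n x Hn Hx. rewrite phi_parts. unfold Re, Im; simpl. split.
    + apply Im_zero.
    + apply Re_pos; assumption.
  - intros x Hx n Hn. rewrite !phi_parts. unfold Re; cbn [fst].
    set (m := 2 * INR n + 1).
    assert (HnR : 1 <= INR n) by (apply (le_INR 1); exact Hn).
    assert (Hm : 3 <= m) by (unfold m; lra).
    assert (Hpos : 0 < Ik 1 m x).
    { apply (maxp (Ik 1 m) (fun y => -2 * Ik 2 m y) (fun y => 4 * Ik 3 m y) (Ik 0 m) (m^2 - 1) (PI / 2)).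
      - intro y. apply is_derive_Reals. apply Ik_deriv.
      - intro y. apply is_derive_Reals.
        replace (4 * Ik 3 m y) with (-2 * (-2 * Ik 3 m y)) by ring.
        apply (is_derive_scal (fun z => Ik 2 m z)). apply Ik_deriv.
      - apply W0; exact Hn.
      - intros y Hy. apply P_pos; exact Hy.
      - nra.
      - intros y Hy. pose proof (ode_id m y (sin_odd_PI n)) as O.
        replace (y ^ 2 * (4 * Ik 3 m y) + 3 * y * (-2 * Ik 2 m y) - (4 * y ^ 2 + (m ^ 2 - 1)) * Ik 1 m y)
          with (-4 * y * Ik 0 m y + (4*y^2 * Ik 3 m y - 6*y * Ik 2 m y - (4*y^2+m^2-1) * Ik 1 m y + 4*y * Ik 0 m y)) by ring.
        rewrite O. ring.
      - pose proof PI_RGT_0; lra.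
      - intros y Hy. apply W_bound; exact Hy.
      - exact Hx. }
    pose proof (link n x) as L. fold m in L. lra.
Qed.
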